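(* Let $n\ge2$ and let $X_1,\dots,X_n$ be operators in a complex Hilbert space $\mathcal{H}$, each Hermitian or skew-Hermitian, defined on a common invariant domain $D$. Let $m^{(1)},\dots,m^{(n)}$ be sequences of positive numbers satisfying (A0), (A1), (A2). Suppose that for every $j\in\{1,\dots,n-1\}$ the pair $(m^{(j)},m^{(n)})$ satisfies (A3) and $[X_j,X_n]=c_jI$ on $D$ for some $c_j\in\mathbb{C}$. Put $\mathbf{X}=(X_1,\dots,X_n)$, $\mathbf{X}'=(X_1,\dots,X_{n-1})$, $\mathbf{m}=(m^{(1)},\dots,m^{(n)})$, $\mathbf{m}'=(m^{(1)},\dots,m^{(n-1)})$. Then $u\in D$ belongs to $\mathcal{S}_{\mathbf{m}}(\mathbf{X})$ if and only if $u\in\mathcal{S}_{\mathbf{m}'}(\mathbf{X}')\cap\mathcal{S}_{m^{(n)}}(X_n)$.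
   Context: A common invariant domain $D$ means $D\subset\mathrm{Dom}(X_j)$ and $X_jD\subset D$ for all $j$. Notation: for $N\ge1$, $M(N)=\bigcup_{k\ge1}\{1,\dots,N\}^k$; for $\alpha=(i_1,\dots,i_k)\in M(N)$, $|\alpha|=k$, $|\alpha|_j=\mathrm{card}\{l: i_l=j\}$. For operators $\mathbf{Y}=(Y_1,\dots,Y_N)$, $\mathbf{Y}_\alpha=Y_{i_1}\cdots Y_{i_k}$ and $C^\infty(\mathbf{Y})=\{u: u\in\mathrm{Dom}(\mathbf{Y}_\alpha)\ \forall\alpha\in M(N)\}$. For sequences $\mathbf{p}=(p^{(1)},\dots,p^{(N)})$ of positive reals, $\mathbf{p}_\alpha=p^{(1)}_{|\alpha|_1}\cdots p^{(N)}_{|\alpha|_N}$ and $\mathcal{S}_{\mathbf{p}}(\mathbf{Y})=\{u\in C^\infty(\mathbf{Y}): \exists A,C>0,\ \|\mathbf{Y}_\alpha u\|\le CA^{|\alpha|}\mathbf{p}_\alpha\ \forall\alpha\in M(N)\}$ (for $N=1$: $\|Y^ku\|\le CA^kp_k$ for all $k\ge1$). Conditions: (A0) $m^{(j)}_0=m^{(j)}_1=1$; (A1) $(m^{(j)}_p)^2\le m^{(j)}_{p-1}m^{(j)}_{p+1}$ for $p\ge1$; (A2) there is $H>0$ with $m^{(j)}_{p+q}\le H^{p+q}m^{(j)}_pm^{(j)}_q$ for all $j$, $p,q\in\mathbb{N}$. A pair $(m^{(j)},m^{(k)})$ satisfies (A3) if there is $L\ge1$ with $p\,m^{(j)}_{p-1}m^{(k)}_{p-1}\le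 L\,m^{(j)}_pm^{(k)}_p$ for all $p\ge1$. *)

(* Defs.v *)
From HB Require Import structures.
From mathcomp Require Import all_boot all_order all_algebra.
From mathcomp Require Import classical_sets reals.
From mathcomp Require Import complex.
Set Implicit Arguments. Unset Strict Implicit. Unset Printing Implicit Defensive.
Import Order.TTheory GRing.Theory Num.Theory.
Local Open Scope ring_scope.
Local Open Scope complex_scope.

Record inner_product (R : realType) (V : lmodType R[i]) := InnerProduct {
  ip :> V -> V -> R[i];
  ip_linl : forall (a : R[i]) (u v w : V), ip (a *: u + v) w = a * ip u w + ip v w;
  ip_conj : forall u v : V, ip u v = conjc (ip v u);
  ip_ge0 : forall u : V, 0 <= ip u u;
  ip_eq0 : forall u : V, ip u u = 0 -> u = 0 }.

Definition hnorm (R : realType) (V : lmodType R[i]) (ip : inner_product V) (u : V) : R :=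
  Num.sqrt (complex.Re (ip u u)).

Definition hilbert_complete (R : realType) (V : lmodType R[i]) (ip : inner_product V) :=
  forall s : nat -> V,
    (forall e : R, 0 < e -> exists N, forall p q, (N <= p)%N -> (N <= q)%N ->
        hnorm ip (s p - s q) < e) ->
    exists l : V, forall e : R, 0 < e -> exists N, forall p, (N <= p)%N ->
        hnorm ip (s p - l) < e.

Definition lin_operator (R : realType) (V : lmodType R[i]) (Dom : set V) (X : V -> V) :=
  Dom 0 /\
  (forall (a : R[i]) u v, Dom u -> Dom v -> Dom (a *: u + v)) /\
  (forall (a : R[i]) u v, Dom u -> Dom v -> X (a *: u + v) = a *: X u + X v).

Definition hermitian_op (R : realType) (V : lmodType R[i]) (ip : inner_product V)
  (Dom : set V) (X : V -> V) :=
  forall u v, Dom u -> Dom v -> ip (X u) v = ip u (X v).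

Definition skew_hermitian_op (R : realType) (V : lmodType R[i]) (ip : inner_product V)
  (Dom : set V) (X : V -> V) :=
  forall u v, Dom u -> Dom v -> ip (X u) v = - ip u (X v).

Definition common_invariant_domain (V : Type) (n : nat) (Dom : nat -> set V)
  (X : nat -> V -> V) (D : set V) :=
  forall j, (1 <= j <= n)%N -> (forall u, D u -> Dom j u) /\ (forall u, D u -> D (X j u)).

(* M(N): nonempty words over {1,...,N}; alpha = [:: i_1; ...; i_k]. *)
Definition multi_index (N : nat) (a : seq nat) :=
  a != [::] /\ all (fun i => (1 <= i <= N)%N) a.

Fixpoint opw (V : Type) (Y : nat -> V -> V) (a : seq nat) (u : V) : V :=
  match a with
  | [::] => u
  | i :: a' => Y i (opw Y a' u)
  end.

Fixpoint in_dom (V : Type) (Dom : nat -> set V) (Y : nat -> V -> V) (a : seq nat) (u : V) : Prop :=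
  match a with
  | [::] => True
  | i :: a' => in_dom Dom Y a' u /\ Dom i (opw Y a' u)
  end.

Definition Cinf (V : Type) (N : nat) (Dom : nat -> set V) (Y : nat -> V -> V) (u : V) :=
  forall a, multi_index N a -> in_dom Dom Y a u.

Definition pw (R : realType) (N : nat) (p : nat -> nat -> R) (a : seq nat) : R :=
  \prod_(1 <= j < N.+1) p j (count_mem j a).

Definition Sclass (R : realType) (V : lmodType R[i]) (ip : inner_product V) (N : nat)
  (Dom : nat -> set V) (Y : nat -> V -> V) (p : nat -> nat -> R) (u : V) :=
  Cinf N Dom Y u /\
  exists A C : R, 0 < A /\ 0 < C /\
    forall a, multi_index N a ->
      hnorm ip (opw Y a u) <= C * A ^+ size a * pw N p a.

Definition condA0 (R : realType) (m : nat -> R) := m 0%N = 1 /\ m 1%N = 1.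
Definition condA1 (R : realType) (m : nat -> R) :=
  forall p, (1 <= p)%N -> m p ^+ 2 <= m p.-1 * m p.+1.
Definition condA2 (R : realType) (n : nat) (m : nat -> nat -> R) :=
  exists H : R, 0 < H /\ forall j, (1 <= j <= n)%N -> forall p q,
      m j (p + q)%N <= H ^+ (p + q) * m j p * m j q.
Definition condA3 (R : realType) (mj mk : nat -> R) :=
  exists L : R, 1 <= L /\ forall p, (1 <= p)%N ->
      p%:R * mj p.-1 * mk p.-1 <= L * mj p * mk p.

(* Main.v *)
Require Import Defs.
From HB Require Import structures.
From mathcomp Require Import all_boot all_order all_algebra.
From mathcomp Require Import classical_sets reals.
From mathcomp Require Import complex.
From mathcomp Require Import ring lra zify.
Import Order.TTheory GRing.Theory Num.Theory.
Local Open Scope ring_scope.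
Set Implicit Arguments. Unset Strict Implicit. Unset Printing Implicit Defensive.
Section IP.
Variables (R : realType) (V : lmodType R[i]) (ip : inner_product V).
Local Open Scope complex_scope.

Lemma ip0l v : ip 0 v = 0.
Proof.
have := ip_linl ip 1 0 0 v; rewrite scale1r addr0 mul1r => h.
by apply: (@addrI _ (ip 0 v)); rewrite addr0 -h.
Qed.

Lemma ipDr a w x y : ip w (a *: x + y) = a^* * ip w x + ip w y.
Proof.
by rewrite [LHS]ip_conj ip_linl rmorphD rmorphM /= -!ip_conj.
Qed.

Lemma ipBl t x y w : ip (x - t *: y) w = ip x w - t * ip y w.
Proof.
by rewrite addrC -scaleNr ip_linl mulNr addrC.
Qed.

Lemma ipBr t w x y : ip w (x - t *: y) = ip w x - t^* * ip w y.
Proof.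
by rewrite addrC -scaleNr ipDr rmorphN mulNr addrC.
Qed.

Lemma ip0r v : ip v 0 = 0.
Proof. by rewrite ip_conj ip0l conjc0. Qed.

Lemma ip_ReE x : ip x x = (complex.Re (ip x x))%:C.
Proof.
have := ip_ge0 ip x; move: (ip x x) => [a b] /ger0_Im /= ->.
by rewrite complexr0.
Qed.

Lemma ip_Re_ge0 x : 0 <= complex.Re (ip x x).
Proof. by have := ip_ge0 ip x; rewrite lecE => /andP[]. Qed.

Lemma hnorm_ge0 x : 0 <= hnorm ip x.
Proof. exact: sqrtr_ge0. Qed.

Lemma hnorm_sqr x : hnorm ip x ^+ 2 = complex.Re (ip x x).
Proof. by rewrite /hnorm sqr_sqrtr // ip_Re_ge0. Qed.

Lemma hnorm_sqrC x : (hnorm ip x ^+ 2)%:C = ip x x.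
Proof. by rewrite hnorm_sqr -ip_ReE. Qed.

Lemma ip_quad x y t s : t^* = s ->
  0 <= ip x x - s * ip x y - t * ((ip x y)^* - s * ip y y).
Proof.
move=> <-; have := ip_ge0 ip (x - t *: y).
by rewrite ipBl !ipBr [ip y x]ip_conj.
Qed.

Lemma CSsq x y : `|ip x y| ^+ 2 <= ip x x * ip y y.
Proof.
have [B0|Bn0] := eqVneq (ip y y) 0.
  have -> : y = 0 by exact: (ip_eq0 B0).
  by rewrite ip0r normr0 expr2 mulr0 ip0r mulr0.
have Bge : 0 <= ip y y := ip_ge0 ip y.
have Bgt : 0 < ip y y by rewrite lt_def Bn0.
have Bc : (ip y y)^* = ip y y by rewrite ip_ReE conjc_real.
have tc : (ip x y / ip y y)^* = (ip x y)^* / ip y y.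
  by rewrite rmorphM /= conjc_inv Bc.
have := ip_quad x y tc.
rewrite sqr_normc.
have -> : ip x x - (ip x y)^* / ip y y * ip x y -
    ip x y / ip y y * ((ip x y)^* - (ip x y)^* / ip y y * ip y y)
    = ip x x - ip x y * (ip x y)^* / ip y y.
  by field.
by rewrite subr_ge0 ler_pdivrMr.
Qed.

Lemma CS x y : `|ip x y| <= (hnorm ip x * hnorm ip y)%:C.
Proof.
have h0 : 0 <= (hnorm ip x * hnorm ip y)%:C.
  by rewrite ler0c mulr_ge0 // hnorm_ge0.
rewrite -(@ler_pXn2r _ 2) // ?nnegrE ?normr_ge0 //.
have -> : (hnorm ip x * hnorm ip y)%:C ^+ 2 = ip x x * ip y y.
  by rewrite -hnorm_sqrC -hnorm_sqrC -rmorphM -rmorphXn exprMn.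
exact: CSsq.
Qed.

End IP.
Lemma opw_cat (T : Type) (Y : nat -> T -> T) a b x :
  opw Y (a ++ b) x = opw Y a (opw Y b x).
Proof. by elim: a => //= i a ->. Qed.

Lemma opw_nseq_const (T : Type) (Y : nat -> T -> T) j a x :
  opw (fun _ => Y j) a x = opw Y (nseq (size a) j) x.
Proof. by elim: a => //= i a ->. Qed.

Section Ops.
Variables (R : realType) (V : lmodType R[i]) (ip : inner_product V)
  (n : nat) (Dom : nat -> set V) (X : nat -> V -> V) (D : set V).
Hypothesis Hlin : forall j, (1 <= j <= n)%N -> lin_operator (Dom j) (X j).
Hypothesis Hherm : forall j, (1 <= j <= n)%N ->
     hermitian_op ip (Dom j) (X j) \/ skew_hermitian_op ip (Dom j) (X j).
Hypothesis HD : common_invariant_domain n Dom X D.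

Definition wf (w : seq nat) := all (fun i => (1 <= i <= n)%N) w.

Lemma XD j x : (1 <= j <= n)%N -> D x -> D (X j x).
Proof. by move=> /HD [_ h] /h. Qed.

Lemma DDom j x : (1 <= j <= n)%N -> D x -> Dom j x.
Proof. by move=> /HD [h _] /h. Qed.

Lemma opwD w x : wf w -> D x -> D (opw X w x).
Proof.
elim: w => //= i w IH /andP[hi hw] Dx.
exact: XD (IH hw Dx).
Qed.

Lemma opw_lin w a x y : wf w -> D x -> D y ->
  opw X w (a *: x + y) = a *: opw X w x + opw X w y.
Proof.
elim: w => //= i w IH /andP[hi hw] Dx Dy.
rewrite IH //.
have [_ [_ h]] := Hlin hi.
by apply: h; apply: DDom => //; apply: opwD.
Qed.

Lemma adj w : wf w -> exists s : R[i], `|s| = 1 /\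
  forall x y, D x -> D y -> ip (opw X w x) y = s * ip x (opw X (rev w) y).
Proof.
elim: w => [_|i w IH /= /andP[hi hw]].
  by exists 1; split; [rewrite normr1 | move=> x y _ _; rewrite mul1r].
have [s [s1 hs]] := IH hw.
have [si [si1 hsi]] : exists si : R[i], `|si| = 1 /\
    forall x y, D x -> D y -> ip (X i x) y = si * ip x (X i y).
  case: (Hherm hi) => h.
    exists 1; split; first by rewrite normr1.
    by move=> x y Dx Dy; rewrite mul1r h //; apply: DDom.
  exists (-1); split; first by rewrite normrN1.
  by move=> x y Dx Dy; rewrite mulN1r h //; apply: DDom.
exists (si * s); split; first by rewrite normrM si1 s1 mulr1.
move=> x y Dx Dy.
rewrite hsi //; last exact: opwD.
rewrite hs //; last exact: XD.
by rewrite rev_cons -cats1 opw_cat /= mulrA.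
Qed.

Lemma norm_adj w x y : wf w -> D x -> D y ->
  `|ip x (opw X w y)| = `|ip (opw X (rev w) x) y|.
Proof.
move=> hw Dx Dy.
have hw' : wf (rev w) by rewrite /wf all_rev.
have [s [s1 hs]] := adj hw'.
by rewrite hs // revK normrM s1 mul1r.
Qed.

Lemma in_dom_wf w x : wf w -> D x -> in_dom Dom X w x.
Proof.
elim: w => //= i w IH /andP[hi hw] Dx; split; first exact: IH.
by apply: DDom => //; apply: opwD.
Qed.

End Ops.
Lemma prod_split1 (R : comNzRingType) (F : nat -> R) r j :
  uniq r -> j \in r -> \prod_(i <- r) F i = F j * \prod_(i <- r | i != j) F i.
Proof. by move=> u jr; rewrite (bigD1_seq j). Qed.

Lemma prod_split2 (R : comNzRingType) (F : nat -> R) r j k :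
  uniq r -> j \in r -> k \in r -> j != k ->
  \prod_(i <- r) F i = F j * F k * \prod_(i <- r | (i != j) && (i != k)) F i.
Proof.
move=> u jr kr jk; rewrite (bigD1_seq j) //= -big_filter.
rewrite (bigD1_seq k) ?filter_uniq // ?mem_filter ?kr ?andbT 1?eq_sym //.
by rewrite big_filter_cond mulrA.
Qed.

Lemma binleq2 k a : ('C(k, a) <= 2 ^ k)%N.
Proof.
elim: k a => [|k IH] [|a] //.
  by rewrite bin0 expn_gt0.
rewrite binS expnS mul2n -addnn; apply: leq_add => //.
Qed.
Section Weights.
Variables (R : realType) (n : nat) (m : nat -> nat -> R) (L mu : R).
Hypothesis Hn1 : (1 <= n)%N.
Hypothesis Hmpos : forall j, (1 <= j <= n)%N -> forall p, 0 < m j p.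
Hypothesis HA1 : forall j, (1 <= j <= n)%N -> condA1 (m j).
Hypothesis HL : forall j, (1 <= j < n)%N -> forall p, (1 <= p)%N ->
  p%:R * m j p.-1 * m n p.-1 <= L * m j p * m n p.
Hypothesis HL1 : 1 <= L.
Hypothesis Hmu : 0 <= mu.
Hypothesis HmuL : mu * L <= 1.

Definition rho j p := m j p.-1 / m j p.

Fixpoint tau k := if k is k'.+1 then Num.max (tau k') (k%:R * rho n k) else 0.

Fixpoint G j a q k := if a is a'.+1 then
  G j a' q k + mu * rho j q * tau k * G j a' q.-1 k.-1 else 1.

Lemma rho_ge0 j p : (1 <= j <= n)%N -> 0 <= rho j p.
Proof.
by move=> hj; rewrite /rho divr_ge0 // ltW // Hmpos.
Qed.

Lemma rho_step j p : (1 <= j <= n)%N -> (1 <= p)%N -> rho j p.+1 <= rho j p.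
Proof.
move=> hj hp; rewrite /rho /=.
have h1 := Hmpos hj p; have h2 := Hmpos hj p.-1; have h3 := Hmpos hj p.+1.
rewrite ler_pdivrMr // mulrAC ler_pdivlMr // -expr2.
exact: (HA1 hj hp).
Qed.

Lemma rho_mono j p q : (1 <= j <= n)%N -> (1 <= p)%N -> (p <= q)%N ->
  rho j q <= rho j p.
Proof.
move=> hj hp /subnK <-; elim: (q - p)%N => [|d IH]; first by rewrite add0n.
rewrite addSn; apply: le_trans IH; apply: rho_step => //.
by rewrite (leq_trans hp) // leq_addl.
Qed.

Lemma rho_A3 j p : (1 <= j < n)%N -> (1 <= p)%N ->
  p%:R * rho j p * rho n p <= L.
Proof.
move=> hj hp.
have hj' : (1 <= j <= n)%N by case/andP: hj => -> /ltnW.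
have hn : (1 <= n <= n)%N by rewrite Hn1 leqnn.
have h1 := Hmpos hj' p; have h2 := Hmpos hn p.
rewrite /rho.
have -> : p%:R * (m j p.-1 / m j p) * (m n p.-1 / m n p) =
  (p%:R * m j p.-1 * m n p.-1) / (m j p * m n p).
  by field; rewrite ?gt_eqF.
rewrite ler_pdivrMr ?mulr_gt0 // mulrA; exact: HL.
Qed.

Lemma tau_ge0 k : 0 <= tau k.
Proof. by elim: k => //= k IH; rewrite le_max IH. Qed.

Lemma tau_step k : tau k <= tau k.+1.
Proof. by rewrite /= le_max lexx. Qed.

Lemma tau_mono k k' : (k <= k')%N -> tau k <= tau k'.
Proof.
move=> /subnK <-; elim: (k' - k)%N => [|d IH]; first by rewrite add0n.
by rewrite addSn; apply: le_trans IH (tau_step _).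
Qed.

Lemma tau_ge k : k%:R * rho n k <= tau k.
Proof.
case: k => [|k]; first by rewrite mul0r.
by rewrite /= le_max lexx orbT.
Qed.

Lemma rho_tau_core j q l : (1 <= j < n)%N -> (1 <= q)%N -> (1 <= l)%N ->
  rho j q * (l%:R * rho n l) * q%:R <= L * (q + l)%:R.
Proof.
move=> hj hq hl.
have hj' : (1 <= j <= n)%N by case/andP: hj => -> /ltnW.
have hn : (1 <= n <= n)%N by rewrite Hn1 leqnn.
have L0 : 0 <= L by apply: le_trans HL1.
have [lq|ql] := leqP l q.
  have r1 : rho j q <= rho j l by apply: rho_mono.
  have A := rho_A3 hj hl.
  have g1 := @rho_ge0 j q hj'; have g2 := @rho_ge0 n l hn.
  have g3 := @rho_ge0 j l hj'.
  apply: (@le_trans _ _ (rho j l * (l%:R * rho n l) * q%:R)).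
    by rewrite ler_wpM2r // ler_wpM2r // mulr_ge0.
  rewrite natrD mulrDr.
  have -> : rho j l * (l%:R * rho n l) * q%:R = l%:R * rho j l * rho n l * q%:R.
    by ring.
  have : l%:R * rho j l * rho n l * q%:R <= L * q%:R by rewrite ler_wpM2r.
  have : 0 <= L * l%:R by rewrite mulr_ge0.
  lra.
have r1 : rho n l <= rho n q by apply: rho_mono => //; apply: ltnW.
have A := rho_A3 hj hq.
have g1 := @rho_ge0 j q hj'; have g2 := @rho_ge0 n l hn.
have g3 := @rho_ge0 n q hn.
apply: (@le_trans _ _ (rho j q * (l%:R * rho n q) * q%:R)).
  by rewrite ler_wpM2r // ler_wpM2l // ler_wpM2l.
rewrite natrD mulrDr.
have : q%:R * rho j q * rho n q * l%:R <= L * l%:R by rewrite ler_wpM2r.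
have : 0 <= L * q%:R by rewrite mulr_ge0.
have -> : rho j q * (l%:R * rho n q) * q%:R = q%:R * rho j q * rho n q * l%:R.
  by ring.
lra.
Qed.

Lemma rho_tau j q k : (1 <= j < n)%N -> (1 <= q)%N ->
  rho j q * tau k * q%:R <= L * (q + k)%:R.
Proof.
move=> hj hq.
have hj' : (1 <= j <= n)%N by case/andP: hj => -> /ltnW.
have L0 : 0 <= L by apply: le_trans HL1.
elim: k => [|k IH]; first by rewrite /= mulr0 mul0r mulr_ge0.
rewrite /= /Num.max; case: ifP => _.
  have : rho j q * (k.+1%:R * rho n k.+1) * q%:R <= L * (q + k.+1)%:R.
    exact: rho_tau_core.
  by [].
by apply: le_trans IH _; rewrite ler_wpM2l // ler_nat addnS leqnSn.
Qed.

Lemma coef_ge0 j q k : (1 <= j <= n)%N -> 0 <= mu * rho j q * tau k.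
Proof.
move=> hj; apply: mulr_ge0; last exact: tau_ge0.
by apply: mulr_ge0 => //; apply: rho_ge0.
Qed.

Lemma G_ge1 j a q k : (1 <= j <= n)%N -> 1 <= G j a q k.
Proof.
move=> hj; elim: a q k => [|a IH] q k /=; first by [].
rewrite -[1]addr0; apply: lerD; first exact: IH.
apply: mulr_ge0; last by apply: le_trans (IH _ _).
exact: coef_ge0.
Qed.

Lemma G_ge0 j a q k : (1 <= j <= n)%N -> 0 <= G j a q k.
Proof. by move=> hj; apply: le_trans (G_ge1 _ _ _ hj). Qed.

Lemma G_step j a q k : (1 <= j <= n)%N -> G j a q k <= G j a.+1 q k.
Proof.
move=> hj /=; rewrite lerDl; apply: mulr_ge0; [exact: coef_ge0 | exact: G_ge0].
Qed.

Lemma G_mono_a j a b q k : (1 <= j <= n)%N -> (a <= b)%N ->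
  G j a q k <= G j b q k.
Proof.
move=> hj /subnK <-; elim: (b - a)%N => [|d IH]; first by rewrite add0n.
by rewrite addSn; apply: le_trans IH (G_step _ _ _ hj).
Qed.

Lemma G_mono_k j a q k k' : (1 <= j <= n)%N -> (k <= k')%N ->
  G j a q k <= G j a q k'.
Proof.
move=> hj; elim: a q k k' => [|a IH] q k k' hk //=.
apply: lerD; first exact: IH.
apply: ler_pM; rewrite ?G_ge0 ?coef_ge0 //.
  apply: ler_wpM2l; last exact: tau_mono.
  by apply: mulr_ge0 => //; apply: rho_ge0.
by apply: IH; rewrite -!subn1 leq_sub2r.
Qed.

Lemma G_bound j a q k : (1 <= j < n)%N -> (a <= q)%N ->
  G j a q k <= 2%:R ^+ a * ('C(k + a, a))%:R.
Proof.
move=> hj.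
have hj' : (1 <= j <= n)%N by case/andP: hj => -> /ltnW.
have L0 : 0 <= L by apply: le_trans HL1.
elim: a q k => [|a IH] q k haq /=; first by rewrite bin0 expr0 mul1r.
pose B : R := 2%:R ^+ a * ('C(k + a, a))%:R.
have B0 : 0 <= B by rewrite mulr_ge0 // exprn_ge0.
have h1 : G j a q k <= B by apply: IH; apply: ltnW.
have h2 : G j a q.-1 k.-1 <= B.
  apply: le_trans (IH _ _ _) _; first by rewrite -ltnS prednK // (leq_trans _ haq).
  rewrite ler_wpM2l ?exprn_ge0 // ler_nat leq_bin2l // leq_add2r leq_pred //.
have hq : (1 <= q)%N by apply: leq_trans haq.
have rt := @rho_tau j q k hj hq.
have g1 := @rho_ge0 j q hj'; have g2 := tau_ge0 k.
have gG := @G_ge0 j a q.-1 k.-1 hj'.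
have h3 : a.+1%:R * (rho j q * tau k) <= L * (a.+1 + k)%:R.
  have qpos : 0 < q%:R :> R by rewrite ltr0n.
  rewrite -(ler_pM2r qpos).
  have haq' : a.+1%:R <= q%:R :> R by rewrite ler_nat.
  move: rt; rewrite !natrD => rt.
  have f1 := ler_wpM2l (ler0n R a.+1) rt.
  have f2 : L * k%:R * a.+1%:R <= L * k%:R * q%:R.
    by rewrite ler_wpM2l // mulr_ge0.
  move: f1 f2; lra.
have h4 : a.+1%:R * (mu * rho j q * tau k * G j a q.-1 k.-1)
    <= (a.+1 + k)%:R * B.
  have e : a.+1%:R * (mu * rho j q * tau k * G j a q.-1 k.-1) =
    mu * (a.+1%:R * (rho j q * tau k)) * G j a q.-1 k.-1 by ring.
  rewrite e.
  have c0 : 0 <= mu * (a.+1%:R * (rho j q * tau k)).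
    by rewrite mulr_ge0 // mulr_ge0 // mulr_ge0.
  have c1 : mu * (a.+1%:R * (rho j q * tau k)) <= (a.+1 + k)%:R.
    apply: le_trans (ler_wpM2l Hmu h3) _.
    by rewrite mulrA ler_piMl // ler0n.
  exact: ler_pM.
have key : (a.+1 + k)%:R * ('C(k + a, a))%:R =
   a.+1%:R * ('C(k + a.+1, a.+1))%:R :> R.
  rewrite -!natrM; congr (_%:R).
  by rewrite -mul_bin_diag addnS /= addSn addnC.
have ha0 : 0 < a.+1%:R :> R by rewrite ltr0n.
rewrite -(ler_pM2l ha0) mulrDr.
have -> : a.+1%:R * (2%:R ^+ a.+1 * ('C(k + a.+1, a.+1))%:R) =
  2%:R * ((a.+1 + k)%:R * B) :> R.
  by rewrite /B mulrA [_ * 2%:R ^+ _]mulrC -mulrA -key exprS; ring.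
have h5 : a.+1%:R * G j a q k <= (a.+1 + k)%:R * B.
  apply: le_trans (ler_wpM2l (ler0n _ _) h1) _.
  by rewrite ler_wpM2r // ler_nat leq_addr.
lra.
Qed.

Lemma G_bound4 j a q k : (1 <= j < n)%N -> (a <= q)%N ->
  G j a q k <= (4 ^ (a + k))%:R.
Proof.
move=> hj haq; apply: le_trans (G_bound k hj haq) _.
rewrite -natrX -natrM ler_nat.
apply: (@leq_trans (2 ^ a * 2 ^ (k + a))); first by rewrite leq_mul2l binleq2 orbT.
rewrite -expnD (_ : 4 = 2 ^ 2)%N // -expnM leq_pexp2l //; lia.
Qed.

End Weights.
Section Words.
Variable n : nat.

Fixpoint actP (P : pred nat) (w : seq nat) : nat :=
  if w is x :: w' then (((P x) && (n \in w')) + actP P w')%N else 0%N.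

Lemma actP_cat P a b :
  actP P (a ++ b) = ((if n \in b then count P a else actP P a) + actP P b)%N.
Proof.
elim: a => [|x a IH] /=; first by case: (n \in b).
rewrite IH mem_cat; case: (n \in b); rewrite ?orbT ?orbF /=; lia.
Qed.

Lemma actP_le P w : (actP P w <= count P w)%N.
Proof. elim: w => //= x w IH; case: (P x); case: (n \in w) => /=; lia. Qed.

Lemma actP_nin P w : n \notin w -> actP P w = 0%N.
Proof.
elim: w => //= x w IH; rewrite in_cons negb_or => /andP[_ h].
by rewrite (negbTE h) andbF IH.
Qed.

Lemma actP_nseq P t : ~~ P n -> actP P (nseq t n) = 0%N.
Proof. by move=> hP; elim: t => //= t ->; rewrite (negbTE hP). Qed.

Lemma word_dec w :
  (exists s d, w = nseq s n ++ d /\ n \notin d) \/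
  (exists w1 j t d, w = w1 ++ j :: nseq t.+1 n ++ d /\ j != n /\ n \notin d).
Proof.
elim: w => [|x w [[s [d [-> hd]]]|[w1 [j [t [d [-> [hj hd]]]]]]]].
- by left; exists 0%N, [::].
- have [->|hx] := eqVneq x n.
    by left; exists s.+1, d.
  case: s => [|s].
    by left; exists 0%N, (x :: d); split => //; rewrite in_cons negb_or eq_sym hx.
  by right; exists [::], x, s, d.
- by right; exists (x :: w1), j, t, d.
Qed.

Lemma actP_normal P s d : ~~ P n -> n \notin d -> actP P (nseq s n ++ d) = 0%N.
Proof.
move=> hP hd; rewrite actP_cat (negbTE hd) actP_nseq // actP_nin //.
Qed.

Lemma actP_w P w1 j t d : ~~ P n -> n \notin d ->
  actP P (w1 ++ j :: nseq t.+1 n ++ d) = (count P w1 + P j)%N.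
Proof.
move=> hP hd; rewrite actP_cat.
have -> : n \in j :: nseq t.+1 n ++ d by rewrite in_cons mem_cat mem_nseq eqxx orbT.
congr (_ + _)%N => /=.
rewrite mem_cat mem_nseq eqxx /= andbT.
rewrite actP_cat (negbTE hd) actP_nseq // actP_nin //.
by rewrite in_cons eqxx (negbTE hP) /= andbT !addn0.
Qed.

Lemma actP_w' P w1 j t d : ~~ P n -> j != n -> n \notin d ->
  actP P (w1 ++ nseq t.+1 n ++ j :: d) = count P w1.
Proof.
move=> hP hj hd; rewrite actP_cat.
have -> : n \in nseq t.+1 n ++ j :: d by rewrite mem_cat mem_nseq eqxx.
rewrite actP_cat.
have -> : n \in j :: d = false by rewrite in_cons eq_sym (negbTE hj) (negbTE hd).
rewrite actP_nseq //= (negbTE hd) andbF actP_nin //.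
by rewrite /= !addn0.
Qed.

Lemma actP_w'' P w1 t d : ~~ P n -> n \notin d ->
  (actP P (w1 ++ nseq t n ++ d) <= count P w1)%N.
Proof.
move=> hP hd; rewrite actP_cat actP_normal // addn0.
by case: ifP => _ //; apply: actP_le.
Qed.

Lemma meas_w' N w1 j t d : j != n -> n \notin d ->
  (size (w1 ++ j :: nseq t.+1 n ++ d) +
     actP (predC1 n) (w1 ++ j :: nseq t.+1 n ++ d) <= N.+1)%N ->
  (size (w1 ++ nseq t.+1 n ++ j :: d) +
     actP (predC1 n) (w1 ++ nseq t.+1 n ++ j :: d) <= N)%N.
Proof.
move=> hj hd.
have hP : ~~ predC1 n n by rewrite /= eqxx.
rewrite actP_w // actP_w' // /= hj !size_cat /= !size_cat /= size_nseq.
lia.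
Qed.

Lemma meas_w'' N w1 j t d : j != n -> n \notin d ->
  (size (w1 ++ j :: nseq t.+1 n ++ d) +
     actP (predC1 n) (w1 ++ j :: nseq t.+1 n ++ d) <= N.+1)%N ->
  (size (w1 ++ nseq t n ++ d) +
     actP (predC1 n) (w1 ++ nseq t n ++ d) <= N)%N.
Proof.
move=> hj hd.
have hP : ~~ predC1 n n by rewrite /= eqxx.
have := actP_w'' w1 t hP hd.
rewrite actP_w // /= hj !size_cat /= !size_cat /= !size_nseq.
lia.
Qed.

End Words.
Section Main.
Local Open Scope complex_scope.
Variables (R : realType) (V : lmodType R[i]) (ip : inner_product V)
  (n : nat) (Dom : nat -> set V) (X : nat -> V -> V) (D : set V)
  (m : nat -> nat -> R).
Hypothesis Hn : (2 <= n)%N.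
Hypothesis Hlin : forall j, (1 <= j <= n)%N -> lin_operator (Dom j) (X j).
Hypothesis Hherm : forall j, (1 <= j <= n)%N ->
     hermitian_op ip (Dom j) (X j) \/ skew_hermitian_op ip (Dom j) (X j).
Hypothesis HD : common_invariant_domain n Dom X D.
Hypothesis Hmpos : forall j, (1 <= j <= n)%N -> forall p, 0 < m j p.
Hypothesis HA1 : forall j, (1 <= j <= n)%N -> condA1 (m j).
Variables (L c lam K mu : R).
Hypothesis HL : forall j, (1 <= j < n)%N -> forall p, (1 <= p)%N ->
  p%:R * m j p.-1 * m n p.-1 <= L * m j p * m n p.
Hypothesis HL1 : 1 <= L.
Hypothesis Hc0 : 0 <= c.
Hypothesis HK : 0 <= K.
Hypothesis Hlam : 0 < lam.
Hypothesis Hmu : c = mu * lam ^+ 2.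
Hypothesis HmuL : mu * L <= 1.
Variable u : V.
Hypothesis Du : D u.
Hypothesis Hcomm : forall j, (1 <= j < n)%N -> exists cj : R[i], `|cj| <= c%:C /\
  forall x, D x -> X j (X n x) - X n (X j x) = cj *: x.
Hypothesis Hbase : forall s d, wf n d -> n \notin d ->
  `|ip u (opw X (nseq s n ++ d) u)| <= (K * lam ^+ (s + size d) * pw n m (nseq s n ++ d))%:C.

Let Hn1 : (1 <= n)%N. Proof. by apply: leq_trans Hn. Qed.
Let hnn : (1 <= n <= n)%N. Proof. by rewrite Hn1 leqnn. Qed.
Let Hmu0 : 0 <= mu.
Proof.
have l2 : 0 < lam ^+ 2 by rewrite exprn_gt0.
by rewrite -(pmulr_lge0 _ l2) -Hmu.
Qed.

Definition act i w := actP n (pred1 i) w.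
Definition F i w := G n m mu i (act i w) (count_mem i w) (count_mem n w).
Definition Psi w := \prod_(1 <= i < n) F i w.

Lemma lt_n_le j : (1 <= j < n)%N -> (1 <= j <= n)%N.
Proof. by case/andP => -> /ltnW. Qed.

Lemma comm_pow j cj : (1 <= j < n)%N ->
  (forall x, D x -> X j (X n x) - X n (X j x) = cj *: x) ->
  forall t x, D x ->
  X j (opw X (nseq t.+1 n) x) =
    opw X (nseq t.+1 n) (X j x) + (t.+1%:R * cj) *: opw X (nseq t n) x.
Proof.
move=> hj hc t x Dx.
have hj' := lt_n_le hj.
have wfn s : wf n (nseq s n) by rewrite /wf all_nseq hnn orbT.
elim: t => [|t IH].
  by rewrite /= mul1r; move/eqP: (hc x Dx); rewrite subr_eq addrC => /eqP.
rewrite [opw X (nseq t.+2 n) _]/= [opw X (nseq t.+2 n) _]/=.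
have Dy : D (opw X (nseq t.+1 n) x) by apply: (opwD HD).
move/eqP: (hc _ Dy); rewrite subr_eq => /eqP ->.
rewrite IH (addrC (opw X (nseq t.+1 n) (X j x))).
have [_ [_ hlin]] := Hlin hnn.
rewrite hlin; last 2 first.
- by apply: (DDom HD) => //; apply: (opwD HD).
- by apply: (DDom HD) => //; apply: (opwD HD) => //; apply: (XD HD).
rewrite addrA addrC; congr (_ + _).
rewrite [opw X (nseq t.+1 n) x]/= -scalerDl.
by congr (_ *: _); rewrite -[t.+2]addn1 natrD mulrDl mul1r addrC.
Qed.

Lemma wf_split w1 j t d : wf n (w1 ++ j :: nseq t n ++ d) ->
  [/\ wf n w1, wf n d & (1 <= j <= n)%N].
Proof.
rewrite /wf all_cat /= all_cat => /andP[h1 /andP[h2 /andP[_ h3]]].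
by split.
Qed.

Lemma opw_swap w1 j t d cj : wf n (w1 ++ j :: nseq t.+1 n ++ d) ->
  (1 <= j < n)%N ->
  (forall x, D x -> X j (X n x) - X n (X j x) = cj *: x) ->
  opw X (w1 ++ j :: nseq t.+1 n ++ d) u =
  (t.+1%:R * cj) *: opw X (w1 ++ nseq t n ++ d) u +
  opw X (w1 ++ nseq t.+1 n ++ j :: d) u.
Proof.
move=> hw hj hc.
have [hw1 hd hj'] := wf_split hw.
have wfn s : wf n (nseq s n) by rewrite /wf all_nseq hnn orbT.
have Dd : D (opw X d u) by apply: (opwD HD).
rewrite opw_cat [opw X (j :: _) _]/= opw_cat (comm_pow hj hc) //.
rewrite addrC (opw_lin Hlin HD) //; last 2 first.
- by apply: (opwD HD).
- by apply: (opwD HD) => //; apply: (XD HD).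
by rewrite !opw_cat.
Qed.

Lemma pw_ge0 w : 0 <= pw n m w.
Proof.
rewrite /pw big_seq; apply: prodr_ge0 => i; rewrite mem_index_iota => hi.
by apply: ltW; apply: Hmpos; rewrite -ltnS.
Qed.

Lemma uniq_io a b : uniq (index_iota a b). Proof. exact: iota_uniq. Qed.

Lemma pw_contract j a b : (1 <= j < n)%N ->
  count_mem j a = (count_mem j b).+1 ->
  count_mem n a = (count_mem n b).+1 ->
  (forall i, i != j -> i != n -> count_mem i a = count_mem i b) ->
  pw n m b = pw n m a * rho m j (count_mem j a) * rho m n (count_mem n a).
Proof.
move=> hj ca cn ci.
have hj' := lt_n_le hj.
have jn : j != n by rewrite ltn_eqF //; case/andP: hj.
have jr : j \in index_iota 1 n.+1 by rewrite mem_index_iota ltnS.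
have nr : n \in index_iota 1 n.+1 by rewrite mem_index_iota ltnS.
rewrite /pw (prod_split2 _ (uniq_io _ _) jr nr jn).
rewrite [in RHS](prod_split2 _ (uniq_io _ _) jr nr jn).
have -> : \prod_(i <- index_iota 1 n.+1 | (i != j) && (i != n)) m i (count_mem i b)
  = \prod_(i <- index_iota 1 n.+1 | (i != j) && (i != n)) m i (count_mem i a).
  by apply: eq_bigr => i /andP[h1 h2]; rewrite ci.
rewrite ca cn /rho /=.
have h1 := Hmpos hj' (count_mem j b).+1.
have h2 := Hmpos hnn (count_mem n b).+1.
by field; rewrite ?gt_eqF.
Qed.

Definition Bnd w := K * lam ^+ size w * pw n m w * Psi w.

Lemma step w1 j t d :
  wf n (w1 ++ j :: nseq t.+1 n ++ d) -> j != n -> n \notin d ->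
  `|ip u (opw X (w1 ++ nseq t.+1 n ++ j :: d) u)| <=
     (Bnd (w1 ++ nseq t.+1 n ++ j :: d))%:C ->
  `|ip u (opw X (w1 ++ nseq t n ++ d) u)| <= (Bnd (w1 ++ nseq t n ++ d))%:C ->
  `|ip u (opw X (w1 ++ j :: nseq t.+1 n ++ d) u)| <=
     (Bnd (w1 ++ j :: nseq t.+1 n ++ d))%:C.
Proof.
move=> hw hjn hd IH1 IH2.
have [hw1 hd' hj'] := wf_split hw.
have hj : (1 <= j < n)%N.
  by case/andP: hj' => -> h; rewrite ltn_neqAle hjn.
have [cj [hcj hc]] := Hcomm hj.
have cnt i : count_mem i (w1 ++ j :: nseq t.+1 n ++ d) =
    (count_mem i (w1 ++ nseq t n ++ d) + (j == i) + (n == i))%N.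
  rewrite !count_cat /= !count_cat !count_nseq /=.
  ring.
have cnt' i : count_mem i (w1 ++ nseq t.+1 n ++ j :: d) =
    count_mem i (w1 ++ j :: nseq t.+1 n ++ d).
  rewrite !count_cat /= !count_cat !count_nseq /=.
  ring.
have ht : (t.+1 <= count_mem n (w1 ++ j :: nseq t.+1 n ++ d))%N.
  rewrite !count_cat /= !count_cat !count_nseq /= eqxx mul1n.
  apply: leq_trans (leq_addr (count_mem n d) _) _.
  by apply: leq_trans (leq_addl _ _) (leq_addl _ _).
set w := w1 ++ j :: nseq t.+1 n ++ d.
set w' := w1 ++ nseq t.+1 n ++ j :: d.
set w'' := w1 ++ nseq t n ++ d.
set q := count_mem j w.
set k := count_mem n w.
set a := count (pred1 j) w1.
have hq : q = (count_mem j w'').+1.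
  by rewrite /q cnt eqxx (eq_sym n j) (negbTE hjn) addn0 addn1.
have hk : k = (count_mem n w'').+1.
  by rewrite /k cnt eqxx (negbTE hjn) addn0 addn1.
have pw' : pw n m w' = pw n m w.
  by rewrite /pw; apply: eq_bigr => i _; rewrite cnt'.
have pw'' : pw n m w'' = pw n m w * rho m j q * rho m n k.
  apply: pw_contract => // i hi1 hi2.
  have e1 : (j == i) = false by rewrite eq_sym (negbTE hi1).
  have e2 : (n == i) = false by rewrite eq_sym (negbTE hi2).
  by rewrite cnt e1 e2 !addn0.
have hPn i : (1 <= i < n)%N -> ~~ pred1 i n.
  by case/andP => _ hi; rewrite /= gtn_eqF.
have jr : j \in index_iota 1 n by rewrite mem_index_iota.
set P' := \prod_(i <- index_iota 1 n | (i \in index_iota 1 n) && (i != j)) F i w.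
have P'0 : 0 <= P'.
  apply: prodr_ge0 => i /andP[]; rewrite mem_index_iota => hi _.
  by apply: (G_ge0 Hmpos Hmu0); apply: lt_n_le.
have Psi_w : Psi w = G n m mu j a.+1 q k * P'.
  rewrite /Psi (prod_split1 _ (uniq_io _ _) jr) big_seq_cond; congr (_ * _).
  by rewrite /F /act (actP_w w1 j t (hPn _ hj) hd) /= eqxx addn1.
have Psi_w' : Psi w' = G n m mu j a q k * P'.
  rewrite /Psi (prod_split1 _ (uniq_io _ _) jr) big_seq_cond; congr (_ * _).
    by rewrite /F /act (actP_w' w1 t (hPn _ hj) hjn hd) !cnt'.
  apply: eq_bigr => i /andP[]; rewrite mem_index_iota => hi hij.
  rewrite /F /act (actP_w' w1 t (hPn _ hi) hjn hd) (actP_w w1 j t (hPn _ hi) hd).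
  rewrite cnt' /= eq_sym (negbTE hij).
  by rewrite addn0 cnt'.
have Psi_w'' : Psi w'' <= G n m mu j a q.-1 k.-1 * P'.
  rewrite /Psi (prod_split1 _ (uniq_io _ _) jr) big_seq_cond.
  apply: ler_pM.
  - by apply: (G_ge0 Hmpos Hmu0).
  - apply: prodr_ge0 => i /andP[]; rewrite mem_index_iota => hi _.
    by apply: (G_ge0 Hmpos Hmu0); apply: lt_n_le.
  - rewrite /F hq hk /=; apply: (G_mono_a Hmpos Hmu0) => //.
    exact: (actP_w'' w1 t (hPn _ hj) hd).
  - apply: ler_prod => i /andP[]; rewrite mem_index_iota => hi hij.
    have hi' := lt_n_le hi.
    rewrite (G_ge0 Hmpos Hmu0) //= /F.
    apply: (@le_trans _ _ (G n m mu i (act i w) (count_mem i w'') (count_mem n w''))).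
      apply: (G_mono_a Hmpos Hmu0) => //.
      rewrite /act (actP_w w1 j t (hPn _ hi) hd) /= eq_sym (negbTE hij) addn0.
      exact: (actP_w'' w1 t (hPn _ hi) hd).
    have -> : count_mem i w'' = count_mem i w.
      have e1 : (j == i) = false by rewrite eq_sym (negbTE hij).
      have e2 : (n == i) = false by rewrite gtn_eqF //; case/andP: hi.
      by rewrite /w cnt e1 e2 !addn0.
    apply: (G_mono_k Hmpos Hmu0) => //.
    by rewrite -/k hk.
have sz' : size w' = size w by rewrite /w /w' !size_cat /= !size_cat /= !size_nseq; ring.
have sz'' : size w = (size w'').+2 by rewrite /w /w'' !size_cat /= !size_cat /= !size_nseq; ring.
rewrite (opw_swap hw hj hc) ipDr.
apply: le_trans (ler_normD _ _) _.
rewrite normrM normcJ normrM normr_nat.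
have h1 : `|cj| * `|ip u (opw X w'' u)| <= (c * Bnd w'')%:C.
  rewrite rmorphM /=; apply: ler_pM => //.
have hh : t.+1%:R * (`|cj| * `|ip u (opw X w'' u)|) + `|ip u (opw X w' u)|
   <= (t.+1%:R * (c * Bnd w'') + Bnd w')%:C.
  rewrite rmorphD rmorphM rmorph_nat /=; apply: lerD => //.
  by apply: ler_wpM2l.
rewrite mulrA in hh; apply: le_trans hh _.
rewrite lecR.
have M0 := pw_ge0 w.
have rj0 : 0 <= rho m j q by apply: (rho_ge0 Hmpos); apply: lt_n_le.
have rn0 : 0 <= rho m n k by apply: (rho_ge0 Hmpos).
have G''0 : 0 <= G n m mu j a q.-1 k.-1 by apply: (G_ge0 Hmpos Hmu0); apply: lt_n_le.
have Ps''0 : 0 <= Psi w''.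
  rewrite /Psi big_seq; apply: prodr_ge0 => i; rewrite mem_index_iota => hi.
  by apply: (G_ge0 Hmpos Hmu0); apply: lt_n_le.
have key : t.+1%:R * rho m n k * Psi w'' <= tau n m k * (G n m mu j a q.-1 k.-1 * P').
  apply: ler_pM => //.
  - by rewrite mulr_ge0.
  - apply: le_trans (tau_ge n m k); apply: ler_wpM2r => //.
    by rewrite ler_nat.
set Z := K * lam ^+ size w'' * lam ^+ 2 * pw n m w * mu * rho m j q.
have Z0 : 0 <= Z.
  have l0 : 0 <= lam by apply: ltW.
  rewrite /Z; apply: mulr_ge0 => //; apply: mulr_ge0 => //.
  by rewrite !mulr_ge0 // exprn_ge0.
rewrite /Bnd sz' pw' pw'' Psi_w' Psi_w sz'' [G _ _ _ _ a.+1 _ _]/= Hmu.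
have -> : t.+1%:R * (mu * lam ^+ 2 *
   (K * lam ^+ size w'' * (pw n m w * rho m j q * rho m n k) * Psi w'')) +
   K * lam ^+ (size w'').+2 * pw n m w * (G n m mu j a q k * P') =
   Z * (t.+1%:R * rho m n k * Psi w'') +
   K * lam ^+ (size w'').+2 * pw n m w * (G n m mu j a q k * P').
  by rewrite /Z; ring.
have -> : K * lam ^+ (size w'').+2 * pw n m w *
   ((G n m mu j a q k + mu * rho m j q * tau n m k * G n m mu j a q.-1 k.-1) * P') =
   Z * (tau n m k * (G n m mu j a q.-1 k.-1 * P')) +
   K * lam ^+ (size w'').+2 * pw n m w * (G n m mu j a q k * P').
  by rewrite /Z !exprS; ring.
by rewrite lerD2r; apply: ler_wpM2l.
Qed.

Lemma Psi_normal s d : n \notin d -> Psi (nseq s n ++ d) = 1.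
Proof.
move=> hd; rewrite /Psi big_seq big1 // => i; rewrite mem_index_iota => hi.
have hP : ~~ pred1 i n by case/andP: hi => _ hi; rewrite /= gtn_eqF.
by rewrite /F /act (actP_normal s hP hd).
Qed.

Lemma wf_perm w1 j t d : wf n (w1 ++ j :: nseq t.+1 n ++ d) ->
  wf n (w1 ++ nseq t.+1 n ++ j :: d) /\ wf n (w1 ++ nseq t n ++ d).
Proof.
move=> hw; have [hw1 hd hj] := wf_split hw.
rewrite /wf !all_cat /= !all_nseq hnn.
by move: hw1 hd; rewrite /wf => -> ->; rewrite hj !orbT.
Qed.

Lemma main_bound w : wf n w -> `|ip u (opw X w u)| <= (Bnd w)%:C.
Proof.
move: {2}(size w + actP n (predC1 n) w)%N (leqnn (size w + actP n (predC1 n) w)%N) => N.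
elim: N w => [|N IH] w hN hw;
  have [[s [d [Ew hd]]]|[w1 [j [t [d [Ew [hjn hd]]]]]]] := word_dec n w.
- rewrite Ew /Bnd Psi_normal // mulr1 size_cat size_nseq.
  apply: Hbase => //; move: hw; rewrite Ew /wf all_cat => /andP[_ ->] //.
- by exfalso; move: hN; rewrite Ew size_cat /= addnS addSn.
- rewrite Ew /Bnd Psi_normal // mulr1 size_cat size_nseq.
  apply: Hbase => //; move: hw; rewrite Ew /wf all_cat => /andP[_ ->] //.
- subst w; have [hw' hw''] := wf_perm hw.
  apply: step => //; apply: IH => //.
  + exact: (meas_w' hjn hd hN).
  + exact: (meas_w'' hjn hd hN).
Qed.

Lemma Psi_bound w : Psi w <= ((4 ^ n.-1)%:R) ^+ size w.
Proof.
have h : Psi w <= \prod_(1 <= i < n) ((4 ^ size w)%:R : R).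
  rewrite /Psi big_seq_cond [X in _ <= X]big_seq_cond.
  apply: ler_prod => i /andP[]; rewrite mem_index_iota => hi _.
  rewrite (G_ge0 Hmpos Hmu0) ?lt_n_le //=.
  apply: le_trans (G_bound4 Hn1 Hmpos HA1 HL HL1 Hmu0 HmuL _ hi (actP_le _ _ _)) _.
  rewrite ler_nat leq_pexp2l //.
  apply: leq_trans (leq_add (actP_le _ _ _) (leqnn _)) _.
  rewrite -count_predUI.
  have -> : count (predI (pred1 i) (pred1 n)) w = 0%N.
    apply/eqP; rewrite -leqn0 -(count_pred0 w) sub_count //= => x /andP[/eqP -> /eqP].
    by move=> e; move: hi; rewrite e ltnn andbF.
  by rewrite addn0 count_size.
apply: le_trans h _.
rewrite prodr_const_nat -natrX -natrX ler_nat -expnM -expnM mulnC subn1.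
by [].
Qed.

End Main.
Section PwLemmas.
Variables (R : realType) (n : nat) (m : nat -> nat -> R).
Hypothesis Hn1 : (1 <= n)%N.
Hypothesis Hm0 : forall j, (1 <= j <= n)%N -> m j 0 = 1.
Hypothesis Hmpos : forall j, (1 <= j <= n)%N -> forall p, 0 < m j p.

Lemma pw_recr a : pw n m a = pw n.-1 m a * m n (count_mem n a).
Proof.
by rewrite /pw -{1 3}(prednK Hn1) big_nat_recr //= prednK.
Qed.

Lemma pw_shrink a : all (fun i => (i <= n.-1)%N) a -> pw n m a = pw n.-1 m a.
Proof.
move=> ha; rewrite pw_recr.
have -> : count_mem n a = 0%N.
  apply/count_memPn; apply/negP => /(allP ha).
  by rewrite -ltnS prednK // ltnn.
by rewrite Hm0 ?mulr1 // Hn1 leqnn.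
Qed.

Lemma pw_nil : pw n m [::] = 1.
Proof.
rewrite /pw big_seq big1 // => j; rewrite mem_index_iota ltnS => hj.
exact: Hm0.
Qed.

Lemma pw_cat_nseq s d : n \notin d -> pw n m (nseq s n ++ d) = m n s * pw n m d.
Proof.
move=> hd; rewrite !pw_recr !count_cat count_nseq /= eqxx mul1n.
rewrite (count_memPn hd) addn0 (Hm0 (j := n)) ?Hn1 ?leqnn // mulr1 mulrC.
congr (_ * _); rewrite /pw big_seq [in RHS]big_seq; apply: eq_bigr => j.
rewrite mem_index_iota => /andP[_ hj].
rewrite count_cat count_nseq /=.
have -> : (n == j) = false by apply/negP => /eqP e; move: hj; rewrite -e -ltnS prednK // ltnn.
by [].
Qed.

Lemma pw_nseq s : pw n m (nseq s n) = m n s.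
Proof. by rewrite -[nseq s n]cats0 pw_cat_nseq // pw_nil mulr1. Qed.

Lemma pw_ge0' a : 0 <= pw n m a.
Proof.
rewrite /pw big_seq; apply: prodr_ge0 => i; rewrite mem_index_iota => hi.
by apply: ltW; apply: Hmpos; rewrite -ltnS.
Qed.

Lemma pw_double (H H' : R) a :
  0 < H -> H <= H' -> 1 <= H' ->
  (forall j, (1 <= j <= n)%N -> forall p q,
      m j (p + q)%N <= H ^+ (p + q) * m j p * m j q) ->
  pw n m (rev a ++ a) <= (H' ^+ (2 * size a)) ^+ n * pw n m a ^+ 2.
Proof.
move=> H0 HH' H'1 HA2.
have e : pw n m (rev a ++ a) =
   \prod_(1 <= j < n.+1) m j (count_mem j a + count_mem j a)%N.
  by apply: eq_bigr => j _; rewrite count_cat count_rev.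
rewrite e.
apply: (@le_trans _ _ (\prod_(1 <= j < n.+1) (H' ^+ (2 * size a) * (m j (count_mem j a) * m j (count_mem j a))))).
  rewrite big_seq [X in _ <= X]big_seq; apply: ler_prod => j.
  rewrite mem_index_iota ltnS => hj.
  have m0 := Hmpos hj; rewrite ltW //=.
  apply: le_trans (HA2 j hj _ _) _; rewrite -mulrA; apply: ler_wpM2r.
    by rewrite mulr_ge0 // ltW.
  set cc := (count_mem j a + count_mem j a)%N.
  have n1 : H \in Num.nneg by rewrite nnegrE ltW.
  have n2 : H' \in Num.nneg by rewrite nnegrE; apply: le_trans HH'; apply: ltW.
  have h1 : H ^+ cc <= H' ^+ cc := lerXn2r cc n1 n2 HH'.
  apply: le_trans h1 _; apply: ler_weXn2l => //.
  by rewrite /cc mul2n -addnn leq_add // count_size.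
rewrite big_split /= prodr_const_nat subn1 /= big_split /= expr2.
by [].
Qed.

End PwLemmas.
Section Final.
Local Open Scope complex_scope.

Lemma nonneg_ReE (R : realType) (z : R[i]) : 0 <= z -> z = (complex.Re z)%:C.
Proof. by case: z => a b /ger0_Im /= ->; rewrite complexr0. Qed.

Lemma nonneg_Re (R : realType) (z : R[i]) : 0 <= z -> 0 <= complex.Re z.
Proof. by rewrite lecE => /andP[]. Qed.

Lemma combine_L (R : realType) (n : nat) (m : nat -> nat -> R) :
  (forall j, (1 <= j <= n)%N -> forall p, 0 < m j p) ->
  (forall j, (1 <= j < n)%N -> condA3 (m j) (m n)) ->
  exists L : R, 1 <= L /\ forall j, (1 <= j < n)%N -> forall p, (1 <= p)%N ->
    p%:R * m j p.-1 * m n p.-1 <= L * m j p * m n p.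
Proof.
move=> Hm H3.
suff: forall k, exists L : R, 1 <= L /\ forall j, (1 <= j < n)%N -> (j < k)%N ->
   forall p, (1 <= p)%N -> p%:R * m j p.-1 * m n p.-1 <= L * m j p * m n p.
  move=> /(_ n) [L [L1 HL]]; exists L; split => // j hj; apply: HL => //.
  by case/andP: hj.
elim=> [|k [L [L1 HL]]]; first by exists 1; split.
have [hk|hk] := boolP (1 <= k < n)%N; last first.
  exists L; split => // j hj; rewrite ltnS leq_eqVlt => /orP[/eqP ejk|]; last exact: HL.
  by move: hk; rewrite -ejk hj.
have [Lk [Lk1 HLk]] := H3 k hk.
exists (L + Lk); split; first by apply: le_trans L1 _; rewrite lerDl; apply: le_trans Lk1.
have hk' : (1 <= k <= n)%N by case/andP: hk => -> /ltnW.
have hnn : (1 <= n <= n)%N by rewrite (leq_trans _ (proj2 (andP hk))) //= leqnn.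
move=> j hj; rewrite ltnS leq_eqVlt => /orP[/eqP ->|hjk] p hp.
  apply: le_trans (HLk p hp) _.
  rewrite -!mulrA ler_pM2r ?mulr_gt0 ?Hm // lerDr.
  by apply: le_trans L1.
apply: le_trans (HL j hj hjk p hp) _.
have hj' : (1 <= j <= n)%N by case/andP: hj => -> /ltnW.
rewrite -!mulrA ler_pM2r ?mulr_gt0 ?Hm // lerDl.
by apply: le_trans Lk1.
Qed.

Lemma combine_c (R : realType) (V : lmodType R[i]) (n : nat) (X : nat -> V -> V) (D : set V) :
  (forall j, (1 <= j < n)%N -> exists c : R[i],
      forall u, D u -> X j (X n u) - X n (X j u) = c *: u) ->
  exists c : R, 0 <= c /\ forall j, (1 <= j < n)%N -> exists cj : R[i],
    `|cj| <= c%:C /\ forall x, D x -> X j (X n x) - X n (X j x) = cj *: x.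
Proof.
move=> Hc.
suff: forall k, exists c : R, 0 <= c /\ forall j, (1 <= j < n)%N -> (j < k)%N ->
    exists cj : R[i], `|cj| <= c%:C /\ forall x, D x -> X j (X n x) - X n (X j x) = cj *: x.
  move=> /(_ n) [c [c0 Hc']]; exists c; split => // j hj; apply: Hc' => //.
  by case/andP: hj.
elim=> [|k [c [c0 Hk]]]; first by exists 0; split.
have [hk|hk] := boolP (1 <= k < n)%N; last first.
  exists c; split => // j hj; rewrite ltnS leq_eqVlt => /orP[/eqP ejk|]; last exact: Hk.
  by move: hk; rewrite -ejk hj.
have [ck hck] := Hc k hk.
have r0 := nonneg_Re (normr_ge0 ck).
exists (c + complex.Re `|ck|); split; first by rewrite addr_ge0.
move=> j hj; rewrite ltnS leq_eqVlt => /orP[/eqP ->|hjk].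
  exists ck; split => //.
  rewrite [X in X <= _](nonneg_ReE (normr_ge0 ck)) lecR lerDr //.
have [cj [hcj hcj']] := Hk j hj hjk.
exists cj; split => //; apply: le_trans hcj _.
by rewrite lecR lerDl.
Qed.

End Final.
Lemma wf_nseq n s : (1 <= n)%N -> wf n (nseq s n).
Proof. by move=> h; rewrite /wf all_nseq h leqnn orbT. Qed.

Lemma count1_size a : all (fun i => (1 <= i <= 1)%N) a -> count_mem 1%N a = size a.
Proof.
elim: a => //= x a IH /andP[hx ha]; rewrite IH //.
by have -> : x = 1%N by apply/eqP; rewrite eqn_leq andbC.
Qed.

Local Open Scope complex_scope.

Theorem proposition2p4 (R : realType) (V : lmodType R[i]) (ip : inner_product V)
  (Hcomplete : hilbert_complete ip)
  (n : nat) (Dom : nat -> set V) (X : nat -> V -> V) (D : set V)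
  (m : nat -> nat -> R) :
  (2 <= n)%N ->
  (forall j, (1 <= j <= n)%N -> lin_operator (Dom j) (X j)) ->
  (forall j, (1 <= j <= n)%N ->
     hermitian_op ip (Dom j) (X j) \/ skew_hermitian_op ip (Dom j) (X j)) ->
  common_invariant_domain n Dom X D ->
  (forall j, (1 <= j <= n)%N -> forall p, 0 < m j p) ->
  (forall j, (1 <= j <= n)%N -> condA0 (m j)) ->
  (forall j, (1 <= j <= n)%N -> condA1 (m j)) ->
  condA2 n m ->
  (forall j, (1 <= j < n)%N -> condA3 (m j) (m n)) ->
  (forall j, (1 <= j < n)%N -> exists c : R[i],
      forall u, D u -> X j (X n u) - X n (X j u) = c *: u) ->
  forall u, D u ->
    (Sclass ip n Dom X m u <->
       Sclass ip n.-1 Dom X m u /\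
       Sclass ip 1 (fun _ => Dom n) (fun _ => X n) (fun _ => m n) u).
Proof.
move=> Hn Hlin Hherm HD Hmpos HA0 HA1 HA2 HA3 Hcm u Du.
have Hn1 : (1 <= n)%N by apply: leq_trans Hn.
have hnn : (1 <= n <= n)%N by rewrite Hn1 leqnn.
have Hm0 : forall j, (1 <= j <= n)%N -> m j 0 = 1 by move=> j hj; case: (HA0 j hj).
have sub_n1 a : all (fun i => (1 <= i <= n.-1)%N) a -> wf n a.
  move=> ha; apply: sub_all ha => i /andP[-> h] /=.
  by apply: leq_trans h (leq_pred _).
have pw_n1 a : all (fun i => (1 <= i <= n.-1)%N) a -> pw n m a = pw n.-1 m a.
  move=> ha; apply: (pw_shrink Hn1 Hm0); apply: sub_all ha => i /andP[].
  by [].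
split.
-
  move=> [Cn [A [C [A0 [C0 hb]]]]]; split.
  + split.
    * move=> a [_ ha]; apply: (in_dom_wf HD) => //; exact: sub_n1.
    * exists A, C; do 2 split => //; move=> a [ha1 ha2].
      rewrite -pw_n1 //; apply: hb; split => //; exact: sub_n1.
  + split.
    * move=> a _; elim: a => //= i a IH; split => //.
      rewrite opw_nseq_const; apply: (DDom HD) => //.
      by apply: (opwD HD) => //; apply: wf_nseq.
    * exists A, C; do 2 split => //; move=> a [ha1 ha2].
      rewrite opw_nseq_const.
      have -> : pw 1 (fun _ => m n) a = m n (size a).
        by rewrite /pw big_nat1 count1_size.
      rewrite -(pw_nseq Hn1 Hm0 (size a)) -[X in A ^+ X](size_nseq (size a) n).
      apply: hb; split; last exact: wf_nseq.
      by case: a ha1 ha2.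
-
  move=> [[_ [A1 [C1 [A10 [C10 hb1]]]]] [_ [A2 [C2 [A20 [C20 hb2]]]]]].
  set A := 1 + A1 + A2.
  set C := C1 + C2 + hnorm ip u + 1.
  have hu0 := hnorm_ge0 ip u.
  have A1A : A1 <= A by move: A10 A20; rewrite /A; lra.
  have A2A : A2 <= A by move: A10 A20; rewrite /A; lra.
  have A0 : 0 <= A by move: A10 A20; rewrite /A; lra.
  have C1C : C1 <= C by move: C10 C20 hu0; rewrite /C; lra.
  have C2C : C2 <= C by move: C10 C20 hu0; rewrite /C; lra.
  have CuC : hnorm ip u <= C by move: C10 C20 hu0; rewrite /C; lra.
  have Cgt : 0 < C by move: C10 C20 hu0; rewrite /C; lra.
  have B1 d : wf n d -> n \notin d ->
      hnorm ip (opw X d u) <= C * A ^+ size d * pw n m d.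
    move=> hd hnd.
    have hd' : all (fun i => (1 <= i <= n.-1)%N) d.
      apply/allP => i hi; have /andP[-> h] := allP hd i hi.
      rewrite -ltnS prednK // ltn_neqAle h andbT.
      by apply/negP => /eqP e; move: hnd; rewrite -e hi.
    case: d hd hd' hnd => [_ _ _|x d] /=.
      by rewrite (pw_nil Hm0) expr0 !mulr1.
    move=> hd hd' hnd.
    apply: le_trans (hb1 (x :: d) _) _; first by split.
    rewrite -pw_n1 //.
    apply: ler_wpM2r; first exact: (pw_ge0' Hmpos).
    have nA1 : A1 \in Num.nneg by rewrite nnegrE ltW.
    have nA : A \in Num.nneg by rewrite nnegrE.
    have hA := lerXn2r (size (x :: d)) nA1 nA A1A.
    apply: ler_pM; [exact: ltW | by rewrite exprn_ge0 // ltW | exact: C1C | exact: hA].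
  have B2 s : hnorm ip (opw X (nseq s n) u) <= C * A ^+ s * m n s.
    case: s => [|s]; first by rewrite /= (Hm0 n hnn) expr0 !mulr1.
    have := hb2 (nseq s.+1 1%N).
    rewrite opw_nseq_const size_nseq.
    have -> : pw 1 (fun _ => m n) (nseq s.+1 1%N) = m n s.+1.
      by rewrite /pw big_nat1 count_nseq /= mul1n.
    move=> /(_ _) h; apply: le_trans (h _) _.
      by split => //; rewrite all_nseq.
    apply: ler_wpM2r; first exact: ltW (Hmpos n hnn _).
    have nA2 : A2 \in Num.nneg by rewrite nnegrE ltW.
    have nA : A \in Num.nneg by rewrite nnegrE.
    have hA := lerXn2r s.+1 nA2 nA A2A.
    apply: ler_pM; [exact: ltW | by rewrite exprn_ge0 // ltW | exact: C2C | exact: hA].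
  have [L [L1 HL]] := combine_L Hmpos HA3.
  have [c [c0 Hc]] := combine_c Hcm.
  have L0 : 0 <= L by apply: le_trans L1.
  set lam := A + c * L + 1.
  have cL0 : 0 <= c * L by rewrite mulr_ge0.
  have lam1 : 1 <= lam by move: A0 cL0; rewrite /lam; lra.
  have lam0 : 0 < lam by apply: lt_le_trans lam1.
  set mu := c / lam ^+ 2.
  have Hmu : c = mu * lam ^+ 2 by rewrite /mu mulfVK // expf_neq0 // gt_eqF.
  have HmuL : mu * L <= 1.
    rewrite /mu mulrAC ler_pdivrMr ?exprn_gt0 // mul1r.
    apply: (@le_trans _ _ lam); first by move: A0 cL0; rewrite /lam; lra.
    by move: lam1; rewrite expr2; nra.
  set K := C ^+ 2.
  have AL : A <= lam by move: A0 cL0; rewrite /lam; lra.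
  have Hbase s d : wf n d -> n \notin d ->
      `|ip u (opw X (nseq s n ++ d) u)| <=
        (K * lam ^+ (s + size d) * pw n m (nseq s n ++ d))%:C.
    move=> hd hnd.
    rewrite opw_cat (norm_adj Hherm HD (wf_nseq s Hn1)) //; last exact: (opwD HD).
    rewrite rev_nseq; apply: le_trans (CS _ _ _) _; rewrite lecR.
    rewrite (pw_cat_nseq Hn1 Hm0 s hnd).
    apply: le_trans (ler_pM (hnorm_ge0 _ _) (hnorm_ge0 _ _) (B2 s) (B1 d hd hnd)) _.
    have Ms := Hmpos n hnn s; have Md := pw_ge0' Hmpos d.
    have e : C * A ^+ s * m n s * (C * A ^+ size d * pw n m d) =
       K * A ^+ (s + size d) * (m n s * pw n m d) by rewrite /K exprD; ring.
    rewrite e; apply: ler_wpM2r; first by rewrite mulr_ge0 // ltW.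
    apply: ler_wpM2l; first by rewrite /K exprn_ge0 // ltW.
    have nA : A \in Num.nneg by rewrite nnegrE.
    have nl : lam \in Num.nneg by rewrite nnegrE ltW.
    exact: (lerXn2r _ nA nl AL).
  have HK : 0 <= K by rewrite /K exprn_ge0 // ltW.
  have MB := main_bound Hn Hlin HD Hmpos c0 HK lam0 Hmu Du Hc Hbase.
  have PB := Psi_bound Hn Hmpos HA1 HL L1 c0 lam0 Hmu HmuL.
  have [H [H0 HH]] := HA2.
  set H' := H + 1.
  have HH' : H <= H' by rewrite /H'; lra.
  have H'1 : 1 <= H' by move: H0; rewrite /H'; lra.
  set Q : R := (4 ^ n.-1)%:R.
  have Q0 : 0 <= Q by [].
  set Lam := lam * H' ^+ n * Q.
  split.
  + move=> a [_ ha]; exact: (in_dom_wf HD).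
  + have Lamgt : 0 < Lam.
      rewrite /Lam mulr_gt0 // ?mulr_gt0 ?exprn_gt0 //; first by apply: lt_le_trans H'1.
      by rewrite /Q ltr0n expn_gt0.
    exists Lam, C; split => //.
    split => // a [ha1 ha2].
    set v := opw X a u.
    have Dv : D v by apply: (opwD HD).
    have hra : wf n (rev a ++ a) by rewrite /wf all_cat all_rev ha2.
    have e1 : `|ip u (opw X (rev a ++ a) u)| = (hnorm ip v ^+ 2)%:C.
      have [s [s1 hs]] := adj Hherm HD ha2.
      rewrite opw_cat -/v.
      have := hs u v Du Dv; rewrite -/v => ev.
      have -> : `|ip u (opw X (rev a) v)| = `|ip v v| by rewrite ev normrM s1 mul1r.
      by rewrite -hnorm_sqrC ger0_norm // ler0c sqr_ge0.
    have := MB _ hra; rewrite e1 lecR /Bnd => hv.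
    have hv2 : hnorm ip v ^+ 2 <= (C * Lam ^+ size a * pw n m a) ^+ 2.
      apply: le_trans hv _.
      rewrite size_cat size_rev.
      have Pa := pw_ge0' Hmpos a.
      have P2 := pw_double Hmpos a H0 HH' H'1 HH.
      have Ps := PB (rev a ++ a); rewrite size_cat size_rev in Ps.
      have Ps0 : 0 <= Psi n m mu (rev a ++ a).
        rewrite /Psi big_seq; apply: prodr_ge0 => i; rewrite mem_index_iota => hi.
        by apply: (G_ge0 Hmpos); [rewrite /mu divr_ge0 // exprn_ge0 // ltW | apply: lt_n_le].
      have l0 : 0 <= lam ^+ (size a + size a) by rewrite exprn_ge0 // ltW.
      have Pr0 := pw_ge0' Hmpos (rev a ++ a).
      have KL0 : 0 <= K * lam ^+ (size a + size a) by rewrite mulr_ge0.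
      apply: (@le_trans _ _ (K * lam ^+ (size a + size a) *
          ((H' ^+ (2 * size a)) ^+ n * pw n m a ^+ 2) * Q ^+ (size a + size a))).
        apply: ler_pM => //.
        - by rewrite mulr_ge0.
        - by apply: ler_wpM2l.
      have e : (C * Lam ^+ size a * pw n m a) ^+ 2 =
        K * lam ^+ (size a + size a) * ((H' ^+ (2 * size a)) ^+ n * pw n m a ^+ 2) *
          Q ^+ (size a + size a).
        rewrite [(H' ^+ (2 * _)) ^+ n]exprAC /Lam /K !exprMn mul2n -addnn !exprD.
        ring.
      by rewrite e.
    have T0 : 0 <= C * Lam ^+ size a * pw n m a.
      apply: mulr_ge0; last exact: (pw_ge0' Hmpos).
      apply: mulr_ge0; first exact: ltW.
      by apply: exprn_ge0; apply: ltW.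
    by rewrite -(@ler_pXn2r _ 2) // nnegrE // hnorm_ge0.
Qed.
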